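(* There is an absolute constant $c_0>0$ such that the following holds. Let $\alpha\in(0,\tfrac12)$, $\beta\in(0,1)$, and let $G$ be a graph on $n$ vertices with at least $\alpha n^2$ edges. Then either $G$ contains at least $c_0\alpha^{80}\beta^{20}n^4$ induced copies of $C_4$, or there is a set $X\subseteq V(G)$ with $|X|\ge0.1\alpha^2n$ and $d(X)\ge1-\beta$.
   Context: For a nonempty $X\subseteq V(G)$ (with $|X|\ge 2$), $d(X)=e(X)/\binom{|X|}{2}$, where $e(X)$ is the number of edges of $G$ with both endpoints in $X$. An induced copy of $C_4$ is a set of $4$ vertices inducing a $4$-cycle. *)

(* Defs.v *)
(* A simple graph is a symmetric irreflexive relation e on a finType T. *)
From HB Require Import structures.
From mathcomp Require Import all_boot all_order all_algebra.
Set Implicit Arguments. Unset Strict Implicit. Unset Printing Implicit Defensive.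
Import Order.TTheory GRing.Theory Num.Theory.

Definition edges_in (T : finType) (e : rel T) (X : {set T}) : nat :=
  #|[set E : {set T} | (E \subset X) && (#|E| == 2) &&
      [exists x : T, exists y : T, (E == [set x; y]) && e x y]]|.

Definition num_edges (T : finType) (e : rel T) : nat := edges_in e [set: T].

(* d(X) = e(X) / binom(|X|,2), meaningful for |X| >= 2 *)
Definition density (R : fieldType) (T : finType) (e : rel T) (X : {set T}) : R :=
  ((edges_in e X)%:R / ('C(#|X|, 2))%:R)%R.

Definition induces_C4 (T : finType) (e : rel T) (S : {set T}) : bool :=
  (#|S| == 4) &&
  [exists a : T, exists b : T, exists c : T, exists d : T,
     [&& S == [set a; b; c; d], e a b, e b c, e c d, e d a,
         ~~ e a c & ~~ e b d]].

Definition num_induced_C4 (T : finType) (e : rel T) : nat :=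
  #|[set S : {set T} | induces_C4 e S]|.

(* Main.v *)
Require Import Defs.
From HB Require Import structures.
From mathcomp Require Import all_boot all_order all_algebra.
From mathcomp Require Import zify ring lra.
Set Implicit Arguments. Unset Strict Implicit. Unset Printing Implicit Defensive.
Import Order.TTheory GRing.Theory Num.Theory.

Lemma sumb_card (T : finType) (A : {pred T}) : \sum_(x : T) ((x \in A) : nat) = #|A|.
Proof. by rewrite -sum1_card [RHS]big_mkcond; apply: eq_bigr => x _; case: (x \in A). Qed.
Lemma pair_set2E (T : finType) (x y a b : T) : x != y ->
  ([set a; b] == [set x; y]) = ((a, b) == (x, y)) || ((a, b) == (y, x)).
Proof.
move=> nxy; rewrite !xpair_eqE.
apply/idP/idP.
  move/eqP=> H.
  have ha : a \in [set x; y] by rewrite -H set21.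
  have hb : b \in [set x; y] by rewrite -H set22.
  have hx : x \in [set a; b] by rewrite H set21.
  have hy : y \in [set a; b] by rewrite H set22.
  move: ha hb hx hy; rewrite !inE.
  by case/orP=> /eqP-> ; case/orP=> /eqP->; rewrite ?eqxx ?(eq_sym y x) ?(negPf nxy) ?orbT ?andbT.
by case/orP=> /andP[/eqP-> /eqP->] //; rewrite setUC.
Qed.

Lemma sum4 (T : finType) (S : {set T}) :
  \sum_(a : T) \sum_(c : T) \sum_(b : T) \sum_(d : T)
     ((d \in S) * ((b \in S) * ((c \in S) * (a \in S)))) = (#|S| ^ 4)%N.
Proof.
under eq_bigr => a _ do under eq_bigr => c _ do under eq_bigr => b _ do rewrite -big_distrl /= sumb_card.
under eq_bigr => a _ do under eq_bigr => c _ do rewrite -big_distrr /= -big_distrl /= sumb_card.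
under eq_bigr => a _ do rewrite -big_distrr /= -big_distrr /= -big_distrl /= sumb_card.
by rewrite -big_distrr /= -big_distrr /= -big_distrr /= sumb_card !expnS expn0 muln1 !mulnA.
Qed.

Section Comb.
Variables (T : finType) (e : rel T).
Hypotheses (esym : symmetric e) (eirr : irreflexive e).

Definition N (v : T) : {set T} := [set u | e v u].
Definition op (X : {set T}) : nat := \sum_(x : T) \sum_(y : T) [&& x \in X, y \in X & e x y].
Definition na (X : {set T}) : nat :=
  \sum_(x : T) \sum_(y : T) [&& x \in X, y \in X, x != y & ~~ e x y].
Definition W (a c : T) : {set T} := N a :&: N c.
Definition nadj (a c : T) : bool := (a != c) && ~~ e a c.

Lemma op_na (X : {set T}) : (op X + na X = #|X| * #|X|.-1)%N.
Proof.
rewrite /op /na -big_split /=.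
rewrite (eq_bigr (fun x => ((x \in X) * #|X|.-1)%N)); last first.
  move=> x _; rewrite -big_split /=.
  rewrite (eq_bigr (fun y => ((y \in X :\ x) && (x \in X) : nat))); last first.
    move=> y _; rewrite !inE; case: (eqVneq y x) => [->|nyx].
      by rewrite eirr !andbF.
    rewrite /=.
    by case: (x \in X); case: (y \in X); case: (e x y).
  case xX: (x \in X); last by rewrite big1 // => y _; rewrite andbF.
  rewrite mul1n (eq_bigr (fun y => ((y \in X :\ x) : nat))); last by move=> y _; rewrite andbT.
  by rewrite sumb_card (cardsD1 x X) xX.
by rewrite -big_distrl /= sumb_card.
Qed.

Lemma edges_op (X : {set T}) : (2 * edges_in e X = op X)%N.
Proof.
rewrite /op /edges_in pair_big /=.
set S2 := [set E : {set T} | _].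
rewrite (_ : \sum_(p | true && true) _ = \sum_(p : T * T | [&& p.1 \in X, p.2 \in X & e p.1 p.2]) 1%N); last first.
  by rewrite [RHS]big_mkcond; apply: eq_bigr => p _; case: ([&& _, _ & _]).
rewrite (partition_big (fun p : T * T => [set p.1; p.2]) (mem S2)) /=; last first.
  move=> [a b] /= /and3P[aX bX eab].
  rewrite inE; apply/andP; split; last by apply/existsP; exists a; apply/existsP; exists b; rewrite eqxx eab.
  apply/andP; split.
    by apply/subsetP=> z; rewrite !inE => /orP[]/eqP->.
  rewrite cards2; case: (eqVneq a b) => // hab.
  by move: eab; rewrite hab eirr.
rewrite mulnC -sum_nat_const; apply: eq_bigr => E.
rewrite inE => /andP[/andP[EX _] /existsP[x /existsP[y /andP[/eqP HE exy]]]].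
have nxy : x != y by apply/eqP=> hxy; move: exy; rewrite hxy eirr.
have xX : x \in X by apply: (subsetP EX); rewrite HE set21.
have yX : y \in X by apply: (subsetP EX); rewrite HE set22.
rewrite (eq_bigl (mem [set (x, y); (y, x)])); last first.
  move=> [a b] /=; rewrite HE pair_set2E // !inE.
  case H: ((a, b) == (x, y)); first by move/eqP: H; case=> -> ->; rewrite xX yX exy.
  case H2: ((a, b) == (y, x)) => /=; last by rewrite andbF.
  by move/eqP: H2; case=> -> ->; rewrite xX yX esym exy.
by rewrite sum1_card cards2 xpair_eqE negb_and nxy.
Qed.
Lemma C4_set (a b c d : T) : nadj a c -> b \in W a c -> d \in W a c -> b != d -> ~~ e b d ->
  induces_C4 e [set a; b; c; d].
Proof.
rewrite /nadj /W !inE => /andP[nac neac] /andP[eab ecb] /andP[ead ecd] nbd nebd.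
have ne : forall x y, e x y -> x != y by move=> x y exy; apply/eqP=> h; move: exy; rewrite h eirr.
apply/andP; split.
  have E4 : [set a; b; c; d] =i [:: a; b; c; d] by move=> z; rewrite !inE !orbA.
  rewrite (eq_card E4).
  apply/eqP/card_uniqP => /=.
  rewrite !inE !negb_or nac nbd (ne _ _ eab) (ne _ _ ead) (ne _ _ ecd).
  by rewrite eq_sym (ne _ _ ecb).
apply/existsP; exists a; apply/existsP; exists b; apply/existsP; exists c; apply/existsP; exists d.
by rewrite eqxx eab (esym b c) ecb ecd (esym d a) ead neac nebd.
Qed.

Lemma C4_bound : (\sum_(a : T) \sum_(c : T) (nadj a c * na (W a c)) <= 256 * num_induced_C4 e)%N.
Proof.
rewrite /na.
under eq_bigr => a _ do under eq_bigr => c _ do (rewrite big_distrr /=; under eq_bigr => b _ do rewrite big_distrr /=).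
set C := [set S | induces_C4 e S].
apply: (@leq_trans (\sum_(a : T) \sum_(c : T) \sum_(b : T) \sum_(d : T) \sum_(S in C)
     ((d \in S) * ((b \in S) * ((c \in S) * (a \in S)))))).
  apply: leq_sum => a _; apply: leq_sum => c _; apply: leq_sum => b _; apply: leq_sum => d _.
  case hac: (nadj a c); last by rewrite mul0n.
  case H: [&& b \in W a c, d \in W a c, b != d & ~~ e b d]; last by rewrite muln0.
  case/and4P: H => hb hd hbd hebd.
  have SC : [set a; b; c; d] \in C by rewrite inE; apply: C4_set.
  rewrite (bigD1 _ SC) /= !inE !eqxx ?orbT /=.
  exact: leq_addr.
under eq_bigr => a _ do under eq_bigr => c _ do under eq_bigr => b _ do rewrite exchange_big /=.
under eq_bigr => a _ do under eq_bigr => c _ do rewrite exchange_big /=.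
under eq_bigr => a _ do rewrite exchange_big /=.
rewrite exchange_big /=.
rewrite /num_induced_C4 -/C mulnC -sum_nat_const.
apply: leq_sum => S; rewrite inE => /andP[/eqP S4 _].
by rewrite sum4 S4.
Qed.

Lemma sum_naN : (\sum_(v : T) na (N v) = \sum_(a : T) \sum_(c : T) (nadj a c * #|W a c|))%N.
Proof.
rewrite /na.
under eq_bigr => v _ do rewrite exchange_big /=.
rewrite exchange_big /=; apply: eq_bigr => a _.
rewrite exchange_big /=; apply: eq_bigr => c _.
rewrite -sumb_card big_distrr /=; apply: eq_bigr => v _.
rewrite /nadj /W !inE (esym a v) (esym c v).
rewrite (esym c a) (eq_sym c a).
by case: (e v a); case: (e v c); case: (a != c); case: (e a c).
Qed.

Lemma op_deg (H : {set T}) : op H = (\sum_(x : T) ((x \in H) * #|N x :&: H|))%N.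
Proof.
rewrite /op; apply: eq_bigr => x _.
rewrite -sumb_card big_distrr /=; apply: eq_bigr => y _.
rewrite !inE.
by case: (x \in H); case: (y \in H); case: (e x y).
Qed.

Lemma opT : op setT = (\sum_(x : T) #|N x|)%N.
Proof. by rewrite op_deg; apply: eq_bigr => x _; rewrite inE mul1n setIT. Qed.

Lemma ie (H : {set T}) (a c : T) :
  (#|N a :&: H| + #|N c :&: H| <= #|H| + #|W a c|)%N.
Proof.
rewrite -cardsUI; apply: leq_add.
  by apply: subset_leq_card; rewrite -setIUl subsetIr.
apply: subset_leq_card; rewrite /W.
by apply/subsetP=> z; rewrite !inE => /andP[/andP[-> _] /andP[-> _]].
Qed.

Lemma bin2_mul (m : nat) : ('C(m, 2) * 2 = m * m.-1)%N.
Proof.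
elim: m => // m IH; rewrite binS bin1 mulnDl IH /=.
case: m {IH} => //= m; lia.
Qed.

Lemma density_op (R : numFieldType) (X : {set T}) :
  density R e X = ((op X)%:R / (#|X| * #|X|.-1)%:R)%R.
Proof.
rewrite /density -edges_op -bin2_mul !natrM.
case: (eqVneq ('C(#|X|, 2)%:R : R)%R 0%R) => [->|nz]; first by rewrite mul0r !invr0 !mulr0.
have n2 : (2%:R : R)%R != 0%R by rewrite pnatr_eq0.
by field.
Qed.

End Comb.

Local Open Scope ring_scope.

Lemma sumR_const (R : numDomainType) (T : finType) (x : R) :
  \sum_(i : T) x = x * #|T|%:R.
Proof. by rewrite sumr_const mulr_natr. Qed.

Lemma sum_ind (R : numDomainType) (T : finType) (A : {pred T}) (x : R) :
  \sum_(i : T) ((i \in A)%:R * x) = #|A|%:R * x.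
Proof. by rewrite -mulr_suml -natr_sum sumb_card. Qed.

Lemma natr_mpred (R : numDomainType) (m : nat) :
  ((m * m.-1)%N%:R : R) = m%:R * (m%:R - 1).
Proof. case: m => [|m]; first by rewrite mul0n mul0r. by rewrite /= natrM -addn1 natrD addrK. Qed.

Lemma sum_pos_ex (T : finType) (f : T -> nat) : (0 < \sum_(x : T) f x)%N -> exists x, (0 < f x)%N.
Proof.
move=> h; case: (pickP (fun x => 0 < f x)%N) => [x fx|H]; first by exists x.
by move: h; rewrite big1 // => x _; move: (H x) => /negbT; rewrite lt0n negbK => /eqP.
Qed.

Lemma small_case (R : realFieldType) (alpha beta : R) (T : finType) (e : rel T) :
    symmetric e -> irreflexive e ->
    0 < alpha -> 0 < beta -> 
    alpha * (#|T|%:R) ^+ 2 <= (num_edges e)%:R ->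
    alpha ^+ 2 * #|T|%:R <= 20 -> (0 < #|T|)%N ->
    exists X : {set T},
         [/\ (2 <= #|X|)%N,
             1 / 10 * alpha ^+ 2 * #|T|%:R <= #|X|%:R
           & 1 - beta <= density R e X].
Proof.
move=> esym eirr a0 b0 hE small n0.
have hS : (0 < op e setT)%N.
  rewrite -(edges_op esym eirr) muln_gt0 /= lt0n; apply/negP => /eqP h.
  move: hE; rewrite /num_edges h; have : 0 < alpha * #|T|%:R ^+ 2.
    by rewrite mulr_gt0 // exprn_gt0 // ltr0n.
  lra.
move: hS; rewrite opT => /sum_pos_ex [x]; rewrite card_gt0 => /set0Pn [y]; rewrite inE => exy.
have nxy : x != y by apply/eqP => h; move: exy; rewrite h eirr.
exists [set x; y]; rewrite cards2 nxy /=; split => //.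
  have : 0 <= alpha ^+ 2 * #|T|%:R by rewrite mulr_ge0 // exprn_ge0 // ltW.
  move=> h; rewrite -mulrA; lra.
have naX : na e [set x; y] = 0%N.
  rewrite /na big1 // => a _; rewrite big1 // => b _.
  suff -> : [&& a \in [set x; y], b \in [set x; y], a != b & ~~ e a b] = false by [].
  apply/negbTE; rewrite !inE; apply/negP => /and4P[ha hb hab].
  move: ha hb hab; case/orP=> /eqP->; case/orP=> /eqP->; rewrite ?eqxx //= => _.
    by rewrite exy.
  by rewrite esym exy.
have opX : op e [set x; y] = 2%N by move: (op_na eirr [set x; y]); rewrite naX addn0 cards2 nxy.
rewrite (density_op esym eirr) opX cards2 nxy /= divff ?pnatr_eq0 //.
lra.
Qed.

Lemma op_real (R : numDomainType) (T : finType) (e : rel T) : irreflexive e -> forall X : {set T},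
  ((op e X)%:R : R) = #|X|%:R * (#|X|%:R - 1) - (na e X)%:R.
Proof. by move=> eirr X; rewrite -natr_mpred -(op_na eirr X) natrD addrK. Qed.

Lemma sparse_na (R : realFieldType) (T : finType) (e : rel T) (beta k : R) (X : {set T}) :
  symmetric e -> irreflexive e -> 0 < beta -> 2 <= k -> k <= #|X|%:R ->
  density R e X < 1 - beta -> beta * (k * (k - 1)) <= (na e X)%:R.
Proof.
move=> esym eirr b0 k2 kX; rewrite (density_op esym eirr) natr_mpred (op_real _ eirr).
set m := #|X|%:R in kX *; set u := (na e X)%:R.
have Dp : 0 < m * (m - 1) by nra.
rewrite ltr_pdivrMr // => h.
have : beta * (m * (m - 1)) < u by nra.
suff : beta * (k * (k - 1)) <= beta * (m * (m - 1)) by lra.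
rewrite ler_pM2l //.
have h1 : 0 <= (m - k) * (m + k - 1) by apply: mulr_ge0; lra.
nra.
Qed.

Lemma dense_of_na (R : realFieldType) (T : finType) (e : rel T) (beta : R) (X : {set T}) :
  symmetric e -> irreflexive e -> (2 <= #|X|)%N ->
  (na e X)%:R <= beta * (#|X|%:R * (#|X|%:R - 1)) -> 1 - beta <= density R e X.
Proof.
move=> esym eirr X2; rewrite (density_op esym eirr) natr_mpred (op_real _ eirr).
have m2 : (2 : R) <= #|X|%:R by rewrite ler_nat.
move=> h; set m := #|X|%:R in m2 h *; set u := (na e X)%:R in h *.
have Dp : 0 < m * (m - 1) by nra.
rewrite ler_pdivlMr //; lra.
Qed.

Lemma large_case (R : realFieldType) (alpha beta : R) (T : finType) (e : rel T) :
    symmetric e -> irreflexive e ->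
    0 < alpha -> alpha < 1 / 2 -> 0 < beta -> beta < 1 ->
    alpha * (#|T|%:R) ^+ 2 <= (num_edges e)%:R ->
    20 < alpha ^+ 2 * #|T|%:R ->
    beta ^+ 2 * (alpha ^+ 2 * #|T|%:R) ^+ 4 / 2 ^+ 24 <= (num_induced_C4 e)%:R
    \/ exists X : {set T},
         [/\ (2 <= #|X|)%N,
             1 / 10 * alpha ^+ 2 * #|T|%:R <= #|X|%:R
           & 1 - beta <= density R e X].
Proof.
move=> esym eirr a0 a1 b0 b1 hE large.
have n0 : 0 < #|T|%:R :> R.
  rewrite ltr0n lt0n; apply/negP => /eqP h; move: large; rewrite h mulr0; lra.
move: hE large n0.
set n := #|T|%:R => hE large n0.
rewrite -[1 / 10 * alpha ^+ 2 * n]mulrA.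
set p := alpha ^+ 2 * n in large *.
set k := p / 10.
have k2 : 2 < k by rewrite /k; lra.
pose bad a c := nadj e a c && (k <= #|W e a c|%:R).
case: (boolP [exists a, exists c, bad a c && (1 - beta <= density R e (W e a c))]).
  move/existsP=> [a /existsP [c /andP [/andP [_ hk] hd]]].
  right; exists (W e a c); split => //.
    have : (2 : R) < #|W e a c|%:R by lra.
    by rewrite ltr_nat => /ltnW.
  by rewrite /k in hk; lra.
move/existsPn => nA.
have sparse : forall a c, bad a c -> density R e (W e a c) < 1 - beta.
  move=> a c hb; move: (nA a) => /existsPn /(_ c); rewrite hb /= -ltNge //.
set B := (\sum_a \sum_c (bad a c : nat))%N.
set G := beta * p ^+ 2 / 100.
case: (lerP G B%:R) => [Bbig|Bsmall].
  left.
  have Tup : B%:R * (beta * (k * (k - 1))) <=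
      (\sum_a \sum_c (nadj e a c * na e (W e a c)))%:R.
    rewrite natr_sum /B natr_sum mulr_suml; apply: ler_sum => a _.
    rewrite natr_sum natr_sum mulr_suml; apply: ler_sum => c _.
    case hb: (bad a c); last by rewrite mul0r ler0n.
    move: (hb) => /andP[hn hk]; rewrite hn mul1n mul1r.
    apply: sparse_na => //; first lra.
    exact: sparse.
  have C4 : (\sum_a \sum_c (nadj e a c * na e (W e a c)))%:R <= 256 * (num_induced_C4 e)%:R :> R.
    by rewrite -natrM ler_nat (C4_bound esym eirr).
  have kk : k ^+ 2 / 2 <= k * (k - 1) by nra.
  have bk : 0 <= beta * (k * (k - 1)) by nra.
  have h1 : G * (beta * (k * (k - 1))) <= B%:R * (beta * (k * (k - 1))) by rewrite ler_wpM2r.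
  have G0 : 0 <= G by rewrite /G; apply: mulr_ge0; [nra | lra].
  have h2 : G * (beta * (k ^+ 2 / 2)) <= G * (beta * (k * (k - 1))).
    by rewrite ler_wpM2l // ler_wpM2l // ltW.
  have e1 : G * (beta * (k ^+ 2 / 2)) = beta ^+ 2 * p ^+ 4 / (100 * 100 * 2) by rewrite /G /k; field.
  have P0 : 0 <= beta ^+ 2 * p ^+ 4 by apply: mulr_ge0; apply: exprn_ge0; [lra | rewrite /p; nra].
  have h3 : beta ^+ 2 * p ^+ 4 / 2 ^+ 24 <= beta ^+ 2 * p ^+ 4 / (100 * 100 * 2) / 256.
    set P := beta ^+ 2 * p ^+ 4 in P0 *.
    have q1 : (0:R) < 2^+24 by lra.
    have q2 : (0:R) < 100*100*2*256 by lra.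
    rewrite -mulrA -invfM ler_pdivrMr // mulrAC ler_pdivlMr //; nra.
  lra.
have nnk : 0 <= k by lra.
have SN : (\sum_v na e (N e v))%:R <= B%:R * n + n * (n * k).
  rewrite (sum_naN esym) natr_sum.
  have -> : B%:R * n + n * (n * k) = \sum_a \sum_c ((bad a c)%:R * n + k).
    under eq_bigr => a _ do rewrite big_split /= sumR_const -mulr_suml -natr_sum.
    rewrite big_split /= sumR_const -mulr_suml -natr_sum /B /n; ring.
  apply: ler_sum => a _; rewrite natr_sum; apply: ler_sum => c _.
  rewrite /bad; case hn: (nadj e a c) => /=; last by rewrite mul0n mul0r add0r.
  rewrite mul1n; case hk: (k <= #|W e a c|%:R) => /=.
    by rewrite mul1r ler_wpDr // /n ler_nat max_card.
  by rewrite mul0r add0r ltW // ltNge hk.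
set s := p / 5.
pose f v := (op e (N e v))%:R - 3 / 4 * #|N e v|%:R ^+ 2 - s * #|N e v|%:R.
pose c := alpha * n - 1 - s.
have an : 40 < alpha * n by rewrite /p in large; nra.
have c0 : 0 <= c by rewrite /c /s /p; nra.
have pw : forall v, c * #|N e v|%:R - p * n - (na e (N e v))%:R <= f v.
  move=> v; rewrite /f (op_real _ eirr) /c /p.
  have := sqr_ge0 (#|N e v|%:R / 2 - alpha * n); nra.
have Sdef : \sum_v #|N e v|%:R = 2 * (num_edges e)%:R :> R.
  by rewrite -natr_sum -(opT e) -(edges_op esym eirr) natrM.
have sumf : 0 < \sum_v f v.
  apply: (@lt_le_trans _ _ (\sum_v (c * #|N e v|%:R - p * n - (na e (N e v))%:R))); last first.
    by apply: ler_sum => v _; apply: pw.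
  rewrite !sumrB -mulr_sumr Sdef sumR_const -/n -natr_sum.
  have h1 : c * (2 * (alpha * n ^+ 2)) <= c * (2 * (num_edges e)%:R) by rewrite ler_wpM2l // ler_wpM2l.
  have h2 : B%:R * n < G * n by rewrite ltr_pM2r.
  have e1 : c * (2 * (alpha * n ^+ 2)) - p * n * n - (G * n + n * (n * k)) =
     n ^+ 2 * (p * (9 / 10 - 2 / 5 * alpha - beta * alpha ^+ 2 / 100) - 2 * alpha).
    by rewrite /c /s /G /k /p; field.
  have h3 : 0 < n ^+ 2 * (p * (9 / 10 - 2 / 5 * alpha - beta * alpha ^+ 2 / 100) - 2 * alpha).
    apply: mulr_gt0; first by apply: exprn_gt0.
    have h4 : 1 / 2 <= 9 / 10 - 2 / 5 * alpha - beta * alpha ^+ 2 / 100 by nra.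
    have h5 : p * (1 / 2) <= p * (9 / 10 - 2 / 5 * alpha - beta * alpha ^+ 2 / 100).
      by rewrite ler_wpM2l //; lra.
    lra.
  lra.
have [v fv] : exists v, 0 < f v.
  case: (pickP (fun v => 0 < f v)) => [v fv | none]; first by exists v.
  move: sumf; rewrite ltNge => /negP; case.
  suff : \sum_v f v <= \sum_(v : T) (0 : R) by rewrite big1_eq.
  apply: ler_sum => v _.
  by move: (none v) => /= /negbT; rewrite -leNgt.
move: fv; rewrite /f.
set H := N e v; set m := #|H|%:R => fv.
set Q := [set a in H | m + k <= 2 * #|N e a :&: H|%:R].
have m0 : 0 <= m by rewrite ler0n.
have opQ : (op e H)%:R <= #|Q|%:R * m + m * ((m + k) / 2).
  rewrite op_deg natr_sum.
  have -> : #|Q|%:R * m + m * ((m + k) / 2) =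
      \sum_x ((x \in Q)%:R * m + (x \in H)%:R * ((m + k) / 2)).
    by rewrite big_split /= !sum_ind.
  apply: ler_sum => x _; rewrite natrM.
  have dm : #|N e x :&: H|%:R <= m by rewrite ler_nat subset_leq_card // subsetIr.
  case xH: (x \in H) => /=; last first.
    have -> : (x \in Q) = false by rewrite inE xH.
    by rewrite !mul0r addr0.
  case xQ: (x \in Q) => /=.
    rewrite !mul1r; have : 0 <= (m + k) / 2 by lra.
    lra.
  move: xQ; rewrite inE xH /= => /negbT; rewrite -ltNge => hlt.
  rewrite !mul1r mul0r add0r; lra.
have opm : (op e H)%:R <= m * (m - 1) by rewrite (op_real _ eirr) -/m; have := ler0n R (na e H); lra.
have s0 : 0 < s by rewrite /s; lra.
have mpos : 0 < m by nra.
have qb : 3 / 20 * p < #|Q|%:R.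
  have : m * (3 / 20 * p) < m * #|Q|%:R by rewrite /s /k in fv opQ *; nra.
  by rewrite ltr_pM2l.
have q3 : (3 < #|Q|)%N by rewrite -(ltr_nat R); lra.
have naQ : (na e Q <= B)%N.
  apply: leq_sum => x _; apply: leq_sum => y _.
  case hq: [&& x \in Q, y \in Q, x != y & ~~ e x y] => //=.
  move/and4P: hq => [xQ yQ nxy nexy].
  have : bad x y; last by move=> ->.
  rewrite /bad /nadj nxy nexy /=.
  have := ie e H x y; rewrite -(ler_nat R) !natrD -/m.
  move: xQ yQ; rewrite !inE => /andP[_ ha] /andP[_ hc].
  lra.
right; exists Q; split.
- by apply: leq_trans q3.
- lra.
apply: dense_of_na => //; first by apply: leq_trans q3.
have qq : (#|Q|%:R) ^+ 2 / 2 <= #|Q|%:R * (#|Q|%:R - 1) :> R.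
  have : (3 : R) < #|Q|%:R by rewrite ltr_nat.
  nra.
have p0 : 0 < p by lra.
have q2 : (3 / 20 * p) ^+ 2 <= (#|Q|%:R) ^+ 2 :> R.
  by rewrite ler_pXn2r // ?nnegrE; lra.
have hB : (na e Q)%:R <= B%:R :> R by rewrite ler_nat.
have : G <= beta * (#|Q|%:R * (#|Q|%:R - 1)).
  have : p ^+ 2 / 100 <= #|Q|%:R * (#|Q|%:R - 1) by lra.
  by rewrite /G -mulrA; apply: ler_wpM2l; lra.
lra.
Qed.

Theorem lemma3p3 :
  exists c0 : rat, 0 < c0 /\
  forall (R : realFieldType) (alpha beta : R) (T : finType) (e : rel T),
    symmetric e -> irreflexive e ->
    0 < alpha -> alpha < 1 / 2 -> 0 < beta -> beta < 1 ->
    alpha * (#|T|%:R) ^+ 2 <= (num_edges e)%:R ->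
    ratr c0 * alpha ^+ 80 * beta ^+ 20 * (#|T|%:R) ^+ 4 <= (num_induced_C4 e)%:R
    \/ exists X : {set T},
         [/\ (2 <= #|X|)%N,
             1 / 10 * alpha ^+ 2 * #|T|%:R <= #|X|%:R
           & 1 - beta <= density R e X].
Proof.
exists ((2%:R : rat) ^+ 24)^-1; split.
  by rewrite invr_gt0 exprn_gt0 // ltr0n.
move=> R alpha beta T e esym eirr a0 a1 b0 b1 hE.
have -> : ratr ((2%:R : rat) ^+ 24)^-1 = ((2 : R) ^+ 24)^-1.
  by rewrite fmorphV rmorphXn rmorph_nat.
case: (posnP #|T|) => [n0 | n0].
  by left; rewrite n0 expr0n /= mulr0.
case: (lerP (alpha ^+ 2 * #|T|%:R) 20) => [small | large].
  by right; apply: small_case.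
case: (large_case esym eirr a0 a1 b0 b1 hE large) => [h|h]; last by right.
left; apply: le_trans h.
have ha : alpha ^+ 80 <= alpha ^+ 8 by apply: ler_wiXn2l => //; lra.
have hb : beta ^+ 20 <= beta ^+ 2 by apply: ler_wiXn2l => //; lra.
have e1 : beta ^+ 2 * (alpha ^+ 2 * #|T|%:R) ^+ 4 / 2 ^+ 24 =
    ((2 : R) ^+ 24)^-1 * alpha ^+ 8 * beta ^+ 2 * #|T|%:R ^+ 4 by field.
rewrite e1.
have c0 : 0 <= ((2 : R) ^+ 24)^-1 by rewrite invr_ge0 exprn_ge0.
have n4 : 0 <= (#|T|%:R : R) ^+ 4 by rewrite exprn_ge0.
apply: ler_wpM2r => //.
rewrite -(mulrA _ (alpha ^+ 80)) -(mulrA _ (alpha ^+ 8)); apply: ler_wpM2l => //.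
exact: (ler_pM (exprn_ge0 80 (ltW a0)) (exprn_ge0 20 (ltW b0)) ha hb).
Qed.
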